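(* Let $m,n,u\in\mathbb{R}$ with $n\neq0$, and let $(G_2,g,J)$ be the three-dimensional Lorentzian Lie group described in the context. Write $\mathbb{V}_{RC}$ for the real vector space of left-invariant Ricci collineations $\xi=\lambda_1\overline{e}_1+\lambda_2\overline{e}_2+\lambda_3\overline{e}_3$ ($\lambda_i\in\mathbb{R}$ constants) associated to the Yano connection. Then $(G_2,g,J)$ admits a nonzero left-invariant Ricci collineation if and only if one of the following holds: (1) $m=0$; in this case $\xi$ is a left-invariant Ricci collineation iff $\lambda_1=0$ and $n\lambda_2=u\lambda_3$, and $\mathbb{V}_{RC}=\langle \frac{u}{n}\overline{e}_2+\overline{e}_3\rangle$; (2) $m\neq0$ and $u=\frac14 m$; in this case $\xi$ is a left-invariant Ricci collineation iff $\lambda_1=0$ and $\lambda_2=-\frac{nu}{n^2+2u^2}\lambda_3$, and $\mathbb{V}_{RC}=\langle -\frac{nu}{n^2+2u^2}\overline{e}_2+\overline{e}_3\rangle$.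
   Context: $G_2$ is a connected three-dimensional Lie group whose Lie algebra has a basis $\{\overline{e}_1,\overline{e}_2,\overline{e}_3\}$ (left-invariant vector fields) with $[\overline{e}_1,\overline{e}_2]=n\overline{e}_2-u\overline{e}_3$, $[\overline{e}_1,\overline{e}_3]=-u\overline{e}_2-n\overline{e}_3$, $[\overline{e}_2,\overline{e}_3]=m\overline{e}_1$, $n\neq0$. The metric $g$ is the left-invariant Lorentzian metric with $g(\overline{e}_1,\overline{e}_1)=g(\overline{e}_2,\overline{e}_2)=1$, $g(\overline{e}_3,\overline{e}_3)=-1$, $g(\overline{e}_i,\overline{e}_j)=0$ for $i\neq j$. $J$ is the left-invariant product structure with $J\overline{e}_1=\overline{e}_1$, $J\overline{e}_2=\overline{e}_2$, $J\overline{e}_3=-\overline{e}_3$. With $\nabla^{LC}$ the Levi-Civita connection of $g$, the Yano connection is $\nabla^{*}_XY=\nabla^{LC}_XY-\frac12(\nabla^{LC}_YJ)JX-\frac14[(\nabla^{LC}_XJ)JY-(\nabla^{LC}_{JX}J)Y]$; its curvature is $R^{*}(X,Y)Z=\nabla^{*}_X\nabla^{*}_YZ-\nabla^{*}_Y\nabla^{*}_XZ-\nabla^{*}_{[X,Y]}Z$; its Ricci tensor is $\mathrm{Ric}^{*}(X,Y)=-g(R^{*}(X,\overline{e}_1)Y,\overline{e}_1)-g(R^{*}(X,\overline{e}_2)Y,\overline{e}_2)+g(R^{*}(X,\overline{e}_3)Y,\overline{e}_3)$; and $\overline{\mathrm{Ric}^{*}}(X,Y)=\frac12(\mathrm{Ric}^{*}(X,Y)+\mathrm{Ric}^{*}(Y,X))$.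 For a left-invariant vector field $\xi$, $(\mathrm{L}_{\xi}\overline{\mathrm{Ric}^{*}})(X,Y)=\xi(\overline{\mathrm{Ric}^{*}}(X,Y))-\overline{\mathrm{Ric}^{*}}([\xi,X],Y)-\overline{\mathrm{Ric}^{*}}(X,[\xi,Y])$; $\xi$ is a left-invariant Ricci collineation if $\mathrm{L}_{\xi}\overline{\mathrm{Ric}^{*}}=0$. *)

(* Defs.v *)
(* vectors of the Lie algebra of G_2 are row vectors 'rV[R]_3
   (coordinates w.r.t. the left-invariant frame e1, e2, e3), R : realType. *)
From HB Require Import structures.
From mathcomp Require Import all_boot all_order all_algebra.
From mathcomp Require Import all_classical all_reals.
Set Implicit Arguments. Unset Strict Implicit. Unset Printing Implicit Defensive.
Import Order.TTheory GRing.Theory Num.Theory.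
Local Open Scope ring_scope.

Section G2.
Variable R : realType.
Variables m n u : R.

Definition vec := 'rV[R]_3.
Definition i1 : 'I_3 := @Ordinal 3 0 isT.
Definition i2 : 'I_3 := @Ordinal 3 1 isT.
Definition i3 : 'I_3 := @Ordinal 3 2 isT.
Definition e1 : vec := delta_mx 0 i1.
Definition e2 : vec := delta_mx 0 i2.
Definition e3 : vec := delta_mx 0 i3.
Definition c1 (X : vec) : R := X 0 i1.
Definition c2 (X : vec) : R := X 0 i2.
Definition c3 (X : vec) : R := X 0 i3.
Definition vec3 (l1 l2 l3 : R) : vec := l1 *: e1 + l2 *: e2 + l3 *: e3.

(* Lie bracket, bilinear extension of
   [e1,e2] = n e2 - u e3, [e1,e3] = -u e2 - n e3, [e2,e3] = m e1 *)
Definition br (X Y : vec) : vec :=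
  (c1 X * c2 Y - c2 X * c1 Y) *: (n *: e2 - u *: e3)
  + (c1 X * c3 Y - c3 X * c1 Y) *: (- u *: e2 - n *: e3)
  + (c2 X * c3 Y - c3 X * c2 Y) *: (m *: e1).

Definition g (X Y : vec) : R := c1 X * c1 Y + c2 X * c2 Y - c3 X * c3 Y.

Definition J (X : vec) : vec := c1 X *: e1 + c2 X *: e2 - c3 X *: e3.

(* Levi-Civita connection on left-invariant fields, via the Koszul formula
   2 g(nabla_X Y, Z) = g([X,Y],Z) - g([Y,Z],X) + g([Z,X],Y)
   and nabla_X Y = sum_k g(e_k,e_k) g(nabla_X Y, e_k) e_k. *)
Definition koszul (X Y Z : vec) : R := g (br X Y) Z - g (br Y Z) X + g (br Z X) Y.
Definition LC (X Y : vec) : vec :=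
  (koszul X Y e1 / 2) *: e1 + (koszul X Y e2 / 2) *: e2 - (koszul X Y e3 / 2) *: e3.

Definition LCJ (X Y : vec) : vec := LC X (J Y) - J (LC X Y).

Definition yano (X Y : vec) : vec :=
  LC X Y - (1/2) *: LCJ Y (J X) - (1/4) *: (LCJ X (J Y) - LCJ (J X) Y).

Definition curv (X Y Z : vec) : vec :=
  yano X (yano Y Z) - yano Y (yano X Z) - yano (br X Y) Z.

Definition ric (X Y : vec) : R :=
  - g (curv X e1 Y) e1 - g (curv X e2 Y) e2 + g (curv X e3 Y) e3.
Definition ricbar (X Y : vec) : R := (ric X Y + ric Y X) / 2.

(* Lie derivative of ricbar along a left-invariant xi, evaluated on
   left-invariant X, Y.  The term xi(ricbar(X,Y)) vanishes since ricbar(X,Y)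
   is constant for left-invariant X, Y. *)
Definition lie_ricbar (xi X Y : vec) : R :=
  0 - ricbar (br xi X) Y - ricbar X (br xi Y).

Definition ricci_coll (xi : vec) : Prop := forall X Y : vec, lie_ricbar xi X Y = 0.

End G2.

(* Main.v *)
Require Import Defs.
From HB Require Import structures.
From mathcomp Require Import all_boot all_order all_algebra.
From mathcomp Require Import all_classical all_reals.
From mathcomp Require Import ring lra.
Import Order.TTheory GRing.Theory Num.Theory.
Local Open Scope ring_scope.

Lemma c1D (R : realType) (X Y : vec R) : c1 (X + Y) = c1 X + c1 Y. Proof. by rewrite /c1 !mxE. Qed.
Lemma c2D (R : realType) (X Y : vec R) : c2 (X + Y) = c2 X + c2 Y. Proof. by rewrite /c2 !mxE. Qed.
Lemma c3D (R : realType) (X Y : vec R) : c3 (X + Y) = c3 X + c3 Y. Proof. by rewrite /c3 !mxE. Qed.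
Lemma c1N (R : realType) (X : vec R) : c1 (- X) = - c1 X. Proof. by rewrite /c1 !mxE. Qed.
Lemma c2N (R : realType) (X : vec R) : c2 (- X) = - c2 X. Proof. by rewrite /c2 !mxE. Qed.
Lemma c3N (R : realType) (X : vec R) : c3 (- X) = - c3 X. Proof. by rewrite /c3 !mxE. Qed.
Lemma c1Z (R : realType) a (X : vec R) : c1 (a *: X) = a * c1 X. Proof. by rewrite /c1 !mxE. Qed.
Lemma c2Z (R : realType) a (X : vec R) : c2 (a *: X) = a * c2 X. Proof. by rewrite /c2 !mxE. Qed.
Lemma c3Z (R : realType) a (X : vec R) : c3 (a *: X) = a * c3 X. Proof. by rewrite /c3 !mxE. Qed.
Lemma c1e1 (R : realType) : c1 (e1 R) = 1. Proof. by rewrite /c1 /e1 !mxE. Qed.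
Lemma c2e1 (R : realType) : c2 (e1 R) = 0. Proof. by rewrite /c2 /e1 !mxE. Qed.
Lemma c3e1 (R : realType) : c3 (e1 R) = 0. Proof. by rewrite /c3 /e1 !mxE. Qed.
Lemma c1e2 (R : realType) : c1 (e2 R) = 0. Proof. by rewrite /c1 /e2 !mxE. Qed.
Lemma c2e2 (R : realType) : c2 (e2 R) = 1. Proof. by rewrite /c2 /e2 !mxE. Qed.
Lemma c3e2 (R : realType) : c3 (e2 R) = 0. Proof. by rewrite /c3 /e2 !mxE. Qed.
Lemma c1e3 (R : realType) : c1 (e3 R) = 0. Proof. by rewrite /c1 /e3 !mxE. Qed.
Lemma c2e3 (R : realType) : c2 (e3 R) = 0. Proof. by rewrite /c2 /e3 !mxE. Qed.
Lemma c3e3 (R : realType) : c3 (e3 R) = 1. Proof. by rewrite /c3 /e3 !mxE. Qed.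

Ltac cesimp := rewrite ?(c1e1, c1e2, c1e3, c2e1, c2e2, c2e3, c3e1, c3e2, c3e3).
Ltac csimp := cesimp; rewrite ?(c1D, c2D, c3D, c1N, c2N, c3N, c1Z, c2Z, c3Z); cesimp.

Lemma c1v (R : realType) (a b c : R) : c1 (vec3 a b c) = a. Proof. rewrite /vec3; csimp; ring. Qed.
Lemma c2v (R : realType) (a b c : R) : c2 (vec3 a b c) = b. Proof. rewrite /vec3; csimp; ring. Qed.
Lemma c3v (R : realType) (a b c : R) : c3 (vec3 a b c) = c. Proof. rewrite /vec3; csimp; ring. Qed.
Ltac vsimp := rewrite ?(c1v, c2v, c3v).

Lemma vecP3 (R : realType) (A B : vec R) :
  c1 A = c1 B -> c2 A = c2 B -> c3 A = c3 B -> A = B.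
Proof.
move=> h1 h2 h3; apply/rowP => -[[|[|[|k]]] Hk] //.
- by have -> : Ordinal Hk = i1 by apply: val_inj.
- by have -> : Ordinal Hk = i2 by apply: val_inj.
- by have -> : Ordinal Hk = i3 by apply: val_inj.
Qed.

Ltac vecc := apply: vecP3; vsimp.

Lemma br_eq (R : realType) (m n u : R) (X Y : vec R) :
  br m n u X Y = vec3 (m * (c2 X * c3 Y - c3 X * c2 Y))
   (n * (c1 X * c2 Y - c2 X * c1 Y) - u * (c1 X * c3 Y - c3 X * c1 Y))
   (- u * (c1 X * c2 Y - c2 X * c1 Y) - n * (c1 X * c3 Y - c3 X * c1 Y)).
Proof. vecc; rewrite /br; csimp; ring. Qed.
Lemma J_eq (R : realType) (X : vec R) : J X = vec3 (c1 X) (c2 X) (- c3 X).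
Proof. vecc; rewrite /J; csimp; ring. Qed.
Lemma LC_eq (R : realType) (m n u : R) (X Y : vec R) :
  LC m n u X Y = vec3 ((1%:R / 2%:R) * m * (c2 X) * (c3 Y) - (1%:R / 2%:R) * m * (c3 X) * (c2 Y) + 1%:R * n * (c2 X) * (c2 Y) + 1%:R * n * (c3 X) * (c3 Y))
   ((1%:R / 2%:R) * m * (c1 X) * (c3 Y) + (1%:R / 2%:R) * m * (c3 X) * (c1 Y) - 1%:R * n * (c2 X) * (c1 Y) - 1%:R * u * (c1 X) * (c3 Y))
   ((1%:R / 2%:R) * m * (c1 X) * (c2 Y) + (1%:R / 2%:R) * m * (c2 X) * (c1 Y) + 1%:R * n * (c3 X) * (c1 Y) - 1%:R * u * (c1 X) * (c2 Y)).
Proof. vecc; rewrite /LC /koszul /g ?br_eq; vsimp; csimp; vsimp; field; done. Qed.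

Lemma LCJ_eq (R : realType) (m n u : R) (X Y : vec R) :
  LCJ m n u X Y = vec3 (- 1%:R * m * (c2 X) * (c3 Y) - 2%:R * n * (c3 X) * (c3 Y))
   (- 1%:R * m * (c1 X) * (c3 Y) + 2%:R * u * (c1 X) * (c3 Y))
   (1%:R * m * (c1 X) * (c2 Y) + 1%:R * m * (c2 X) * (c1 Y) + 2%:R * n * (c3 X) * (c1 Y) - 2%:R * u * (c1 X) * (c2 Y)).
Proof. vecc; rewrite /LCJ ?LC_eq ?J_eq; vsimp; csimp; vsimp; field; done. Qed.

Lemma yano_eq (R : realType) (m n u : R) (X Y : vec R) :
  yano m n u X Y = vec3 (- 1%:R * m * (c3 X) * (c2 Y) + 1%:R * n * (c2 X) * (c2 Y))
   (- 1%:R * n * (c2 X) * (c1 Y) + 1%:R * u * (c3 X) * (c1 Y))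
   (- 1%:R * n * (c1 X) * (c3 Y) - 1%:R * u * (c1 X) * (c2 Y) + 1%:R * u * (c2 X) * (c1 Y)).
Proof. vecc; rewrite /yano ?LCJ_eq ?LC_eq ?J_eq; vsimp; csimp; vsimp; field; done. Qed.

Lemma curv_eq (R : realType) (m n u : R) (X Y Z : vec R) :
  curv m n u X Y Z = vec3 (- 1%:R * m * n * (c1 X) * (c3 Y) * (c2 Z) - 1%:R * m * n * (c2 X) * (c3 Y) * (c1 Z) + 1%:R * m * n * (c3 X) * (c1 Y) * (c2 Z) + 1%:R * m * n * (c3 X) * (c2 Y) * (c1 Z) - 1%:R * m * u * (c1 X) * (c2 Y) * (c2 Z) + 1%:R * m * u * (c2 X) * (c1 Y) * (c2 Z) + 1%:R * n * u * (c1 X) * (c3 Y) * (c2 Z) + 1%:R * n * u * (c2 X) * (c3 Y) * (c1 Z) - 1%:R * n * u * (c3 X) * (c1 Y) * (c2 Z) - 1%:R * n * u * (c3 X) * (c2 Y) * (c1 Z) - 1%:R * n ^+ 2 * (c1 X) * (c2 Y) * (c2 Z) + 1%:R * n ^+ 2 * (c2 X) * (c1 Y) * (c2 Z))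
   (1%:R * m * n * (c2 X) * (c3 Y) * (c2 Z) - 1%:R * m * n * (c3 X) * (c2 Y) * (c2 Z) - 1%:R * n * u * (c2 X) * (c3 Y) * (c2 Z) + 1%:R * n * u * (c3 X) * (c2 Y) * (c2 Z) + 1%:R * n ^+ 2 * (c1 X) * (c2 Y) * (c1 Z) - 1%:R * n ^+ 2 * (c2 X) * (c1 Y) * (c1 Z) + 1%:R * u ^+ 2 * (c1 X) * (c2 Y) * (c1 Z) - 1%:R * u ^+ 2 * (c2 X) * (c1 Y) * (c1 Z))
   (1%:R * m * n * (c2 X) * (c3 Y) * (c3 Z) - 1%:R * m * n * (c3 X) * (c2 Y) * (c3 Z) - 1%:R * n * u * (c1 X) * (c2 Y) * (c1 Z) + 1%:R * n * u * (c2 X) * (c1 Y) * (c1 Z)).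
Proof. vecc; rewrite /curv ?yano_eq ?br_eq; vsimp; csimp; vsimp; ring. Qed.

Lemma ric_eq (R : realType) (m n u : R) (X Y : vec R) :
  ric m n u X Y = (- 1%:R * m * n * (c2 X) * (c3 Y) - 1%:R * m * u * (c2 X) * (c2 Y) - 1%:R * n ^+ 2 * (c1 X) * (c1 Y) - 1%:R * n ^+ 2 * (c2 X) * (c2 Y) - 1%:R * u ^+ 2 * (c1 X) * (c1 Y)).
Proof. rewrite /ric /g ?curv_eq; vsimp; cesimp; ring. Qed.

Lemma ricbar_eq (R : realType) (m n u : R) (X Y : vec R) :
  ricbar m n u X Y = (- (1%:R / 2%:R) * m * n * (c2 X) * (c3 Y) - (1%:R / 2%:R) * m * n * (c3 X) * (c2 Y) - 1%:R * m * u * (c2 X) * (c2 Y) - 1%:R * n ^+ 2 * (c1 X) * (c1 Y) - 1%:R * n ^+ 2 * (c2 X) * (c2 Y) - 1%:R * u ^+ 2 * (c1 X) * (c1 Y)).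
Proof. rewrite /ricbar !ric_eq; field; done. Qed.

Lemma lie_eq (R : realType) (m n u : R) (A X Y : vec R) :
  lie_ricbar m n u A X Y = (1%:R * (c1 A) * m * n * u * (c2 X) * (c2 Y) - 1%:R * (c1 A) * m * n * u * (c3 X) * (c3 Y) - 1%:R * (c1 A) * m * u ^+ 2 * (c2 X) * (c3 Y) - 1%:R * (c1 A) * m * u ^+ 2 * (c3 X) * (c2 Y) - 1%:R * (c1 A) * n ^+ 2 * u * (c2 X) * (c3 Y) - 1%:R * (c1 A) * n ^+ 2 * u * (c3 X) * (c2 Y) + 2%:R * (c1 A) * n ^+ 3 * (c2 X) * (c2 Y) - (1%:R / 2%:R) * (c2 A) * m * n * u * (c1 X) * (c2 Y) - (1%:R / 2%:R) * (c2 A) * m * n * u * (c2 X) * (c1 Y) + (1%:R / 2%:R) * (c2 A) * m * n ^+ 2 * (c1 X) * (c3 Y) + (1%:R / 2%:R) * (c2 A) * m * n ^+ 2 * (c3 X) * (c1 Y) + 1%:R * (c2 A) * m * u ^+ 2 * (c1 X) * (c3 Y) + 1%:R * (c2 A) * m * u ^+ 2 * (c3 X) * (c1 Y) - 1%:R * (c2 A) * n ^+ 3 * (c1 X) * (c2 Y) - 1%:R * (c2 A) * n ^+ 3 * (c2 X) * (c1 Y) + (1%:R / 2%:R) * (c3 A) * m * n * u * (c1 X) * (c3 Y) + (1%:R / 2%:R) * (c3 A) * m * n * u * (c3 X) * (c1 Y) - (1%:R / 2%:R) * (c3 A) * m * n ^+ 2 * (c1 X) * (c2 Y) - (1%:R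 / 2%:R) * (c3 A) * m * n ^+ 2 * (c2 X) * (c1 Y) + 1%:R * (c3 A) * n ^+ 2 * u * (c1 X) * (c2 Y) + 1%:R * (c3 A) * n ^+ 2 * u * (c2 X) * (c1 Y)).
Proof. rewrite /lie_ricbar !ricbar_eq ?br_eq; vsimp; field; done. Qed.

Lemma c10 (R : realType) : c1 (0 : vec R) = 0. Proof. by rewrite /c1 mxE. Qed.
Lemma c20 (R : realType) : c2 (0 : vec R) = 0. Proof. by rewrite /c2 mxE. Qed.
Lemma c30 (R : realType) : c3 (0 : vec R) = 0. Proof. by rewrite /c3 mxE. Qed.

Lemma vdec {R : realType} (A : vec R) : A = vec3 (c1 A) (c2 A) (c3 A).
Proof. by vecc. Qed.

Definition Pf {R : realType} (m n u a2 a3 : R) :=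
  n * u * a3 - n ^+ 2 * a2 - m * u * a2 / 2 - m * n * a3 / 2.
Definition Q0 {R : realType} (n u a2 a3 : R) :=
  u ^+ 2 * a2 + n * u * a3 / 2 + n ^+ 2 * a2 / 2.

Lemma key (R : realType) (m n u : R) (hn : n != 0) (A : vec R) :
  ricci_coll m n u A <->
  [/\ c1 A = 0, Pf m n u (c2 A) (c3 A) = 0 & m * Q0 n u (c2 A) (c3 A) = 0].
Proof.
split.
- move=> H.
  have e22 : c1 A * (2 * n ^+ 3 + m * n * u) = 0.
    apply: (etrans _ (H (e2 R) (e2 R))); rewrite lie_eq; cesimp; ring.
  have e33 : - (c1 A * (m * n * u)) = 0.
    apply: (etrans _ (H (e3 R) (e3 R))); rewrite lie_eq; cesimp; ring.
  have e12 : n * Pf m n u (c2 A) (c3 A) = 0.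
    apply: (etrans _ (H (e1 R) (e2 R))); rewrite lie_eq /Pf; cesimp; field; done.
  have e13 : m * Q0 n u (c2 A) (c3 A) = 0.
    apply: (etrans _ (H (e1 R) (e3 R))); rewrite lie_eq /Q0; cesimp; field; done.
  move/eqP: e33; rewrite oppr_eq0 => /eqP e33.
  have h1 : c1 A * (2 * n ^+ 3) = 0.
    have -> : c1 A * (2 * n ^+ 3) = c1 A * (2 * n ^+ 3 + m * n * u) - c1 A * (m * n * u) by ring.
    by rewrite e22 e33 subr0.
  split => //.
  + move/eqP: h1; rewrite mulf_eq0 => /orP[/eqP //|].
    by rewrite mulf_eq0 pnatr_eq0 /= expf_eq0 /= (negbTE hn).
  + move/eqP: e12; rewrite mulf_eq0 (negbTE hn) /= => /eqP //.
- move=> [a1 hP hQ] X Y.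
  rewrite lie_eq a1.
  transitivity ((c1 X * c2 Y + c2 X * c1 Y) * (n * Pf m n u (c2 A) (c3 A))
     + (c1 X * c3 Y + c3 X * c1 Y) * (m * Q0 n u (c2 A) (c3 A))).
    rewrite /Pf /Q0; field; done.
  by rewrite hP hQ !mulr0 addr0.
Qed.

Lemma Dpos {R : realType} (n u : R) : n != 0 -> n ^+ 2 + 2 * u ^+ 2 != 0.
Proof.
move=> hn; have hn2 : 0 < n ^+ 2 by rewrite exprn_even_gt0.
have hu2 := sqr_ge0 u.
rewrite gt_eqF //; lra.
Qed.

Theorem theorem3p6 (R : realType) (m n u : R) (hn : n != 0) :
  ((exists xi : vec R, xi != 0 /\ ricci_coll m n u xi) <->
     (m = 0 \/ (m != 0 /\ u = m / 4)))
  /\ (m = 0 ->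
        (forall l1 l2 l3 : R,
           ricci_coll m n u (vec3 l1 l2 l3) <-> (l1 = 0 /\ n * l2 = u * l3))
        /\ (forall xi : vec R,
              ricci_coll m n u xi <->
              exists c : R, xi = c *: ((u / n) *: e2 R + e3 R)))
  /\ (m != 0 -> u = m / 4 ->
        (forall l1 l2 l3 : R,
           ricci_coll m n u (vec3 l1 l2 l3) <->
           (l1 = 0 /\ l2 = - (n * u / (n ^+ 2 + 2 * u ^+ 2)) * l3))
        /\ (forall xi : vec R,
              ricci_coll m n u xi <->
              exists c : R,
                xi = c *: ((- (n * u / (n ^+ 2 + 2 * u ^+ 2))) *: e2 R + e3 R))).
Proof.
have hD := @Dpos R n u hn.
have K := @key R m n u hn.
have v3ne0 : forall a b : R, vec3 a b 1 != 0.
  move=> a b; apply/eqP => h; have := congr1 (@c3 R) h.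
  by rewrite c3v c30 => /eqP; rewrite oner_eq0.
split; [split|split].
- case=> xi [xi0 /K [a1 hP hQ]].
  case: (eqVneq m 0) => hm; [by left | right; split => //].
  apply/eqP; move: xi0; apply: contraR => hu.
  move/eqP: hQ; rewrite mulf_eq0 (negbTE hm) /= => /eqP hQ.
  have ha2 : c2 xi = 0.
    have h : c2 xi * (n * (m / 4 - u) * (n ^+ 2 + u ^+ 2)) = 0.
      transitivity ((n * u / 2) * Pf m n u (c2 xi) (c3 xi) - n * (u - m / 2) * Q0 n u (c2 xi) (c3 xi)).
        rewrite /Pf /Q0; field; done.
      by rewrite hP hQ !mulr0 subrr.
    move/eqP: h; rewrite mulf_eq0 => /orP[/eqP //|].
    have hn2 : 0 < n ^+ 2 by rewrite exprn_even_gt0.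
    have hu2 := sqr_ge0 u.
    rewrite !mulf_eq0 (negbTE hn) /= subr_eq0 eq_sym (negbTE hu) /=.
    by rewrite gt_eqF //; lra.
  have ha3 : c3 xi = 0.
    have h : c3 xi * (m * n) = 0.
      transitivity (-2 * (Pf m n u (c2 xi) (c3 xi) - 2 * Q0 n u (c2 xi) (c3 xi))).
        rewrite /Pf /Q0 ha2; field; done.
      by rewrite hP hQ !mulr0 subrr mulr0.
    move/eqP: h; rewrite mulf_eq0 => /orP[/eqP //|].
    by rewrite mulf_eq0 (negbTE hm) (negbTE hn).
  by apply/eqP; rewrite (vdec xi) a1 ha2 ha3 /vec3 !scale0r !addr0.
- case=> [hm | [hm hu]].
  + exists (vec3 0 (u / n) 1); split; first exact: v3ne0.
    apply/K; rewrite c1v c2v c3v /Pf /Q0 hm; split => //.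
      field; done.
    by rewrite mul0r.
  + exists (vec3 0 (- (n * u / (n ^+ 2 + 2 * u ^+ 2))) 1); split; first exact: v3ne0.
    apply/K; rewrite c1v c2v c3v /Pf /Q0.
    have hm4 : m = 4 * u by rewrite hu; field.
    rewrite hm4; split => //; field; done.
- move=> hm.
  have part : forall l1 l2 l3 : R,
      ricci_coll m n u (vec3 l1 l2 l3) <-> (l1 = 0 /\ n * l2 = u * l3).
    move=> l1 l2 l3; rewrite K c1v c2v c3v /Pf /Q0 hm; split.
    * move=> [-> hP _]; split => //.
      have h : n * (u * l3 - n * l2) = 0 by rewrite -hP; ring.
      move/eqP: h; rewrite mulf_eq0 (negbTE hn) /= subr_eq0 => /eqP h.
      by rewrite h.
    * move=> [-> h]; split => //; last by rewrite mul0r.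
      have hl2 : l2 = u * l3 / n by rewrite -h; field.
      rewrite hl2; field; done.
  split => // xi.
  rewrite {1}(vdec xi) part; split.
  + move=> [a1 h]; exists (c3 xi); apply: vecP3; csimp.
    * by rewrite a1; ring.
    * rewrite -[LHS](mulKf hn) h; field; done.
    * ring.
  + move=> [c ->]; csimp; split; first ring.
    field; done.
- move=> hm hu.
  have hm4 : m = 4 * u by rewrite hu; field.
  have part : forall l1 l2 l3 : R,
      ricci_coll m n u (vec3 l1 l2 l3) <->
      (l1 = 0 /\ l2 = - (n * u / (n ^+ 2 + 2 * u ^+ 2)) * l3).
    move=> l1 l2 l3; rewrite K c1v c2v c3v; split.
    * move=> [-> hP hQ]; split => //.
      move/eqP: hQ; rewrite mulf_eq0 (negbTE hm) /= => /eqP hQ.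
      have h : (n ^+ 2 + 2 * u ^+ 2) * l2 + n * u * l3 = 0.
        by rewrite -[RHS](mulr0 2) -hQ /Q0; field.
      apply/eqP; rewrite -subr_eq0.
      have -> : l2 - - (n * u / (n ^+ 2 + 2 * u ^+ 2)) * l3 =
                ((n ^+ 2 + 2 * u ^+ 2) * l2 + n * u * l3) / (n ^+ 2 + 2 * u ^+ 2).
        field; done.
      by rewrite h mul0r.
    * move=> [-> ->]; rewrite /Pf /Q0 hm4; split => //; field; done.
  split => // xi.
  rewrite {1}(vdec xi) part; split.
  + move=> [a1 h]; exists (c3 xi); apply: vecP3; csimp.
    * by rewrite a1; ring.
    * rewrite h; ring.
    * ring.
  + move=> [c ->]; csimp; split; ring.
Qed.
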